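(* Let $(Y,\preceq,\prec,\to)$ be a solid vector space. Then (C6) each convergent sequence in $Y$ has a unique limit, and (C7) each convergent sequence $(x_n)$ in $Y$ is bounded, i.e. there exist $a,b\in Y$ with $a\preceq x_n\preceq b$ for all $n$.
   Context: Vector space with convergence: a real vector space $Y$ with a relation $\to$ between sequences in $Y$ and points of $Y$ (write $x_n\to x$, $x$ ''a limit''; uniqueness not assumed a priori) such that (C1) $x_n\to x$, $y_n\to y$ imply $x_n+y_n\to x+y$; (C2) $x_n\to x$, $\lambda\in\mathbb R$ imply $\lambda x_n\to\lambda x$; (C3) $\lambda_n\to\lambda$ in $\mathbb R$ imply $\lambda_n x\to\lambda x$. $A\subseteq Y$ is open if $x_n\to x\in A$ implies $x_n\in A$ for all but finitely many $n$; closed if $x_n\to x$, $x_n\in A$ $\forall n$ imply $x\in A$; $A^\circ$ is the union of all open subsets of $A$. A cone is a nonempty closed $K$ with $\lambda K\subseteq K$ ($\lambda\ge0$), $K+K\subseteq K$, $K\cap(-K)=\{0\}$; solid if $K\ne\{0\}$, $K^\circ\ne\emptyset$. A vector ordering is a partial order $\preceq$ with (V1) $x\preceq y\Rightarrow x+z\preceq y+z$; (V2) $\lambda\ge0$, $x\preceq y\Rightarrow\lambda x\preceq\lambda y$; (V3) $x_n\to x$, $y_n\to y$, $x_n\preceq y_n$ $\forall n\Rightarrow x\preceq y$. Solid vector space: positive cone $K=\{x:x\succeq0\}$ solid, with $x\prec y$ iff $y-x\in K^\circ$. *)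

(* Defs.v *)
From HB Require Import structures.
From mathcomp Require Import all_boot all_order all_algebra.
From mathcomp Require Import all_classical all_reals topology normedtype sequences.
Set Implicit Arguments. Unset Strict Implicit. Unset Printing Implicit Defensive.
Import Order.TTheory GRing.Theory Num.Theory.
Import numFieldNormedType.Exports.
Local Open Scope ring_scope.
Local Open Scope classical_set_scope.

Section VSC.
Variables (R : realType) (Y : lmodType R).
Variable conv : (nat -> Y) -> Y -> Prop.

Definition conv_C1 : Prop := forall (xs ys : nat -> Y) (x y : Y),
  conv xs x -> conv ys y -> conv (fun n => xs n + ys n) (x + y).
Definition conv_C2 : Prop := forall (xs : nat -> Y) (x : Y) (lam : R),
  conv xs x -> conv (fun n => lam *: xs n) (lam *: x).
Definition conv_C3 : Prop := forall (lams : nat -> R) (lam : R) (x : Y),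
  lams @ \oo --> lam -> conv (fun n => lams n *: x) (lam *: x).

Definition vector_space_with_convergence : Prop :=
  [/\ conv_C1, conv_C2 & conv_C3].

Definition conv_open (A : Y -> Prop) : Prop :=
  forall (xs : nat -> Y) (x : Y), conv xs x -> A x ->
    exists N : nat, forall n : nat, (N <= n)%N -> A (xs n).
Definition conv_closed (A : Y -> Prop) : Prop :=
  forall (xs : nat -> Y) (x : Y), conv xs x -> (forall n, A (xs n)) -> A x.
Definition conv_interior (A : Y -> Prop) : Y -> Prop :=
  fun x => exists U : Y -> Prop, [/\ conv_open U, (forall y, U y -> A y) & U x].

Definition is_cone (K : Y -> Prop) : Prop :=
  [/\ (exists x, K x), conv_closed K,
      (forall (lam : R) x, 0 <= lam -> K x -> K (lam *: x)),
      (forall x y, K x -> K y -> K (x + y)) &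
      (forall x, K x -> K (- x) -> x = 0)].

Definition is_solid_cone (K : Y -> Prop) : Prop :=
  [/\ is_cone K, (exists x, K x /\ x <> 0) & (exists x, conv_interior K x)].

Variable le : Y -> Y -> Prop.

Definition is_vector_ordering : Prop :=
  [/\ (forall x, le x x),
      (forall x y, le x y -> le y x -> x = y) &
      (forall x y z, le x y -> le y z -> le x z)] /\
  [/\ (forall x y z, le x y -> le (x + z) (y + z)),
      (forall (lam : R) x y, 0 <= lam -> le x y -> le (lam *: x) (lam *: y)) &
      (forall (xs ys : nat -> Y) x y, conv xs x -> conv ys y ->
         (forall n, le (xs n) (ys n)) -> le x y)].

Definition positive_cone : Y -> Prop := fun x => le 0 x.

Definition strict_lt (x y : Y) : Prop := conv_interior positive_cone (y - x).

Definition solid_vector_space : Prop :=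
  [/\ vector_space_with_convergence, is_vector_ordering &
      is_solid_cone positive_cone].
End VSC.

(* Main.v *)
Require Import Defs.
From HB Require Import structures.
From mathcomp Require Import all_boot all_order all_algebra.
From mathcomp Require Import all_classical all_reals topology normedtype sequences.
Local Open Scope ring_scope.
Local Open Scope classical_set_scope.
Import Order.TTheory GRing.Theory Num.Theory.
Import numFieldNormedType.Exports.

Theorem theorem6p6 (R : realType) (Y : lmodType R)
  (conv : (nat -> Y) -> Y -> Prop) (le : Y -> Y -> Prop) :
  solid_vector_space conv le ->
  (forall (xs : nat -> Y) (x y : Y), conv xs x -> conv xs y -> x = y) /\
  (forall (xs : nat -> Y) (x : Y), conv xs x ->
     exists a b : Y, forall n : nat, le a (xs n) /\ le (xs n) b).
Proof.
move=> [[C1 C2 C3] [[refl anti trans] [V1 V2 V3]] [[_ _ Kscal Kadd _] _ [e [U [Uo UK Ue]]]]].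
have Ccst : forall x : Y, conv (fun _ => x) x.
  move=> x.
  have hc : (fun _ : nat => (1:R)) @ \oo --> (1:R) by apply: cvg_cst.
  have := C3 _ _ x hc.
  have -> : (fun _ : nat => (1:R) *: x) = fun _ => x by apply: funext => n; rewrite scale1r.
  by rewrite scale1r.
have Cneg : forall xs x, conv xs x -> conv (fun n => - xs n) (- x).
  move=> xs x h; have := C2 _ _ (-1) h.
  have -> : (fun n => (-1) *: xs n) = fun n => - xs n by apply: funext => n; rewrite scaleN1r.
  by rewrite scaleN1r.
have toK : forall a b, le 0 (b - a) -> le a b.
  move=> a b h; have := V1 _ _ a h; by rewrite add0r subrK.
have fromK : forall a b, le a b -> le 0 (b - a).
  move=> a b h; have := V1 _ _ (- a) h; by rewrite subrr.
have eK : le 0 e by apply: UK.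
split.
  move=> xs x y hx hy.
  have := C1 _ _ _ _ hx (Cneg _ _ hy).
  have -> : (fun n => xs n + - xs n) = fun _ => 0 by apply: funext => n; rewrite subrr.
  move=> h0; apply/eqP; rewrite -subr_eq0; apply/eqP.
  apply: anti; first exact: V3 h0 (Ccst 0) (fun _ => refl 0).
  exact: V3 (Ccst 0) h0 (fun _ => refl 0).
have absorb : forall y, exists c : R, 0 <= c /\ le y (c *: e).
  move=> y.
  have h1 := C3 _ _ y (@cvg_harmonic R).
  rewrite scale0r in h1.
  have h2 := C1 _ _ _ _ (Ccst e) (Cneg _ _ h1).
  rewrite oppr0 addr0 in h2.
  have [N HN] := Uo _ _ h2 Ue.
  have HK := UK _ (HN N (leqnn N)).
  exists (N.+1%:R); split => //.
  have := V2 (N.+1%:R) _ _ (ler0n _ _) (toK _ _ HK).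
  rewrite scalerA /= mulfV ?scale1r //.
  by rewrite pnatr_eq0.
have mono : forall c d : R, c <= d -> le (c *: e) (d *: e).
  move=> c d cd; apply: toK; rewrite -scalerBl; apply: Kscal => //.
  by rewrite subr_ge0.
have upper : forall xs x, conv xs x -> exists b, forall n, le (xs n) b.
  move=> xs x hx.
  have h1 := C1 _ _ _ _ (Ccst e) (C1 _ _ _ _ (Ccst x) (Cneg _ _ hx)).
  rewrite subrr addr0 in h1.
  have [N HN] := Uo _ _ h1 Ue.
  have tail : forall n, (N <= n)%N -> le (xs n) (e + x).
    move=> n /HN /UK h; apply: toK; move: h.
    suff -> : e + x - xs n = e + (x + - xs n) by [].
    by rewrite addrA.
  have [d [d0 Hd]] := absorb (e + x).
  have fin : forall M, exists c : R, 0 <= c /\ forall n, (n < M)%N -> le (xs n) (c *: e).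
    elim=> [|M [c [c0 Hc]]]; first by exists 0; split => // n.
    have [c' [c'0 Hc']] := absorb (xs M).
    exists (c + c'); split; first by rewrite addr_ge0.
    move=> n; rewrite ltnS leq_eqVlt => /orP [/eqP ->|/Hc h].
      eapply trans; first exact: Hc'; apply: mono; by rewrite ?lerDl ?lerDr //.
    eapply trans; first exact: h; apply: mono; by rewrite ?lerDl ?lerDr //.
  have [c [c0 Hc]] := fin N.
  exists ((c + d) *: e) => n.
  case: (leqP N n) => Nn.
    eapply trans; first exact: (tail _ Nn); eapply trans; first exact: Hd; apply: mono; by rewrite ?lerDl ?lerDr //.
  eapply trans; first exact: (Hc _ Nn); apply: mono; by rewrite ?lerDl ?lerDr //.
move=> xs x hx.
have [b Hb] := upper _ _ hx.
have [b' Hb'] := upper _ _ (Cneg _ _ hx).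
exists (- b'), b => n; split => //.
apply: toK; rewrite opprK addrC; have := fromK _ _ (Hb' n).
by rewrite opprK.
Qed.
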